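(* Let $\mathcal X=[0,1]^t$ with $d(x,y)=\|x-y\|_\infty$, let $\mathcal C=[1/4,3/4]^t$, and let $0<\epsilon<1/64$. Suppose that for some integer $k\ge1$ there is a panel decision function $\widetilde q:\mathcal X^k\to\mathcal C$ such that for every facility location instance $\langle\mathcal X,\mathcal C,d,(x_1,\dots,x_n)\rangle$ (with $n\ge k$), $$\mathbb E_{S\sim\mathcal U_{k,n}}\big[\textsc{Social-Cost}(\widetilde q(S))\big]\le(1+\epsilon)\cdot\textsc{Social-Opt}.$$ Then $k\ge c\,t/\epsilon^2$ for an absolute constant $c>0$ (i.e., $k=\Omega((1/\epsilon)^2 t)$).
   Context: For agent locations $x_1,\dots,x_n\in\mathcal X$, $\textsc{Social-Cost}(q)=\frac1n\sum_{i=1}^n d(q,x_i)$ and $\textsc{Social-Opt}=\min_{q\in\mathcal C}\textsc{Social-Cost}(q)$. For a panel $S\subseteq[n]$ of size $k$, $\widetilde q(S)$ denotes $\widetilde q$ applied to the locations $(x_i)_{i\in S}$. $\mathcal U_{k,n}$ is the uniform distribution over size-$k$ subsets of $[n]$. *)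

(* Defs.v *)
From HB Require Import structures.
From mathcomp Require Import all_boot all_order all_algebra.
From mathcomp Require Import classical_sets reals Rstruct.
Set Implicit Arguments. Unset Strict Implicit. Unset Printing Implicit Defensive.
Import Order.TTheory GRing.Theory Num.Theory.
Local Open Scope ring_scope.
Local Open Scope classical_set_scope.

Definition RR := Rdefinitions.R.

Definition pt (t : nat) := 'I_t -> RR.

Definition dinf (t : nat) (x y : pt t) : RR :=
  \big[Num.max/0]_(j < t) `|x j - y j|.

Definition inX (t : nat) (x : pt t) : Prop := forall j, 0 <= x j <= 1.
Definition inC (t : nat) (x : pt t) : Prop := forall j, 1/4 <= x j <= 3/4.

Definition social_cost (t n : nat) (x : 'I_n -> pt t) (q : pt t) : RR :=
  (\sum_(i < n) dinf q (x i)) / n%:R.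

(* Social-Opt = min_{q in C} Social-Cost(q) (taken as the infimum, which is attained) *)
Definition social_opt (t n : nat) (x : 'I_n -> pt t) : RR :=
  inf [set social_cost x q | q in inC (t:=t)].

(* The locations (x_i)_{i in S}, listed in increasing order of the index i,
   as a k-tuple (S has size k). *)
Definition panel (t n k : nat) (x : 'I_n -> pt t) (S : {set 'I_n}) : 'I_k -> pt t :=
  fun j => nth (fun _ => 0) [seq x i | i <- enum S] j.

Definition exp_panel_cost (t n k : nat) (q : ('I_k -> pt t) -> pt t)
    (x : 'I_n -> pt t) : RR :=
  (\sum_(S : {set 'I_n} | #|S| == k) social_cost x (q (@panel t n k x S))) / ('C(n, k))%:R.

(* Main.v *)
Require Import Defs.
From mathcomp Require Import all_boot all_order all_algebra.
From mathcomp Require Import classical_sets reals Rstruct.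
From mathcomp Require Import ring lra zify.
Set Implicit Arguments. Unset Strict Implicit. Unset Printing Implicit Defensive.
Import Order.TTheory GRing.Theory Num.Theory.
Local Open Scope ring_scope.

Section Prod.
Variable I : finType.

Definition wt (pi : I -> bool -> RR) (b : {ffun I -> bool}) : RR :=
  \prod_i pi i (b i).
Definition Ex (pi : I -> bool -> RR) (F : {ffun I -> bool} -> RR) : RR :=
  \sum_b wt pi b * F b.

Definition Eb (p : bool -> RR) (g : bool -> RR) := p true * g true + p false * g false.

Lemma Ex_prod pi h :
  Ex pi (fun b => \prod_i h i (b i)) = \prod_i Eb (pi i) (h i).
Proof.
rewrite /Ex /wt /Eb.
have -> : \prod_i (pi i true * h i true + pi i false * h i false) =
  \prod_i \sum_j (pi i j * h i j) by apply: eq_bigr => i _; rewrite big_bool.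
rewrite (bigA_distr_bigA (fun i j => pi i j * h i j)) /=.
by apply: eq_bigr => b _; rewrite big_split.
Qed.

Definition indep (F : {ffun I -> bool} -> RR) (i : I) :=
  forall b b' : {ffun I -> bool}, (forall l, l != i -> b l = b' l) -> F b = F b'.

Definition flip (i : I) (b : {ffun I -> bool}) : {ffun I -> bool} :=
  [ffun l => if l == i then ~~ b l else b l].

Lemma flipK i : involutive (flip i).
Proof.
move=> b; apply/ffunP => l; rewrite !ffunE.
by case: (l == i) => //; rewrite negbK.
Qed.

Lemma Ex_coord pi i g F : pi i true + pi i false = 1 -> indep F i ->
  Ex pi (fun b => g (b i) * F b) = Eb (pi i) g * Ex pi F.
Proof.
move=> hp hF.
have split (H : {ffun I -> bool} -> RR) : \sum_(b : {ffun I -> bool}) H b = \sum_(b : {ffun I -> bool} | b i) (H b + H (flip i b)).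
  rewrite (bigID (fun b : {ffun I -> bool} => b i)) /= big_split /=; congr (_ + _).
  rewrite (reindex (flip i)) /=; last by exists (flip i) => b _; rewrite flipK.
  by apply: eq_bigl => b; rewrite ffunE eqxx negbK.
rewrite /Ex (split (fun b => wt pi b * (g (b i) * F b))) (split (fun b => wt pi b * F b)).
rewrite mulr_sumr; apply: eq_bigr => b bi.
have Ff : F (flip i b) = F b.
  by apply: hF => l li; rewrite ffunE (negbTE li).
have fi : flip i b i = false by rewrite ffunE eqxx bi.
rewrite Ff /wt.
have -> : \prod_l pi l (flip i b l) = pi i false * \prod_(l | l != i) pi l (b l).
  rewrite (bigD1 i) //= fi; congr (_ * _); apply: eq_bigr => l li.
  by rewrite ffunE (negbTE li).
rewrite (bigD1 i) //= bi.
rewrite fi /Eb.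
have -> : pi i false = 1 - pi i true by rewrite -hp; ring.
ring.
Qed.

Lemma Ex_set pi (s : seq I) g F : (forall i, pi i true + pi i false = 1) -> uniq s ->
  (forall i, i \in s -> Eb (pi i) (g i) = 1) ->
  (forall i, i \in s -> indep F i) ->
  Ex pi (fun b => (\prod_(i <- s) g i (b i)) * F b) = Ex pi F.
Proof.
move=> hp; elim: s => [|a s IH] /= us hg hF.
  by apply: eq_bigr => b _; rewrite big_nil mul1r.
move/andP: us => [nas us].
rewrite -(IH us); last 2 first.
- by move=> i iS; apply: hg; rewrite inE iS orbT.
- by move=> i iS; apply: hF; rewrite inE iS orbT.
have E1 := hg a (mem_head _ _).
transitivity (Eb (pi a) (g a) * Ex pi (fun b => \prod_(i <- s) g i (b i) * F b)); last by rewrite E1 mul1r.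
rewrite -Ex_coord //.
  by rewrite /Ex; apply: eq_bigr => b _; rewrite big_cons !mulrA.
move=> b b' hb; congr (_ * _); last by apply: hF (mem_head _ _) _ _ hb.
apply: eq_big_seq => i iS; congr (g i _); apply: hb.
by apply: contraNneq nas => <-.
Qed.

End Prod.

Lemma CS (I : finType) (w x y : I -> RR) : (forall i, 0 <= w i) ->
  (\sum_i w i * x i * y i) ^+ 2 <= (\sum_i w i * x i ^+ 2) * (\sum_i w i * y i ^+ 2).
Proof.
move=> w0.
set A := \sum_i w i * x i ^+ 2; set B := \sum_i w i * y i ^+ 2; set C := \sum_i w i * x i * y i.
have quad l : 0 <= A - 2 * l * C + l ^+ 2 * B.
  have -> : A - 2 * l * C + l ^+ 2 * B = \sum_i w i * (x i - l * y i) ^+ 2.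
    rewrite /A /B /C mulr_sumr mulr_sumr -sumrN -!big_split /=.
    by apply: eq_bigr => i _; ring.
  by apply: sumr_ge0 => i _; apply: mulr_ge0 => //; apply: sqr_ge0.
have B0 : 0 <= B by apply: sumr_ge0 => i _; apply: mulr_ge0 => //; apply: sqr_ge0.
have A0 : 0 <= A by apply: sumr_ge0 => i _; apply: mulr_ge0 => //; apply: sqr_ge0.
case: (eqVneq B 0) => [Bz|Bnz].
  have hC : C = 0.
    apply/eqP; apply: contraT => Cn.
    have e : 2 * ((A + 1) / (2 * C)) * C = A + 1.
      by field; exact: Cn.
    have := quad ((A + 1) / (2 * C)); rewrite Bz mulr0 addr0 e.
    lra.
  by rewrite hC Bz; lra.
have Bp : 0 < B by rewrite lt_neqAle eq_sym Bnz B0.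
have := quad (C / B).
have -> : A - 2 * (C / B) * C + (C / B) ^+ 2 * B = (A * B - C ^+ 2) / B by field.
by rewrite pmulr_lge0 ?invr_gt0 // subr_ge0.
Qed.

Section Ex2.
Variable I : finType.
Implicit Types (pi : I -> bool -> RR) (F G : {ffun I -> bool} -> RR).

Lemma Ex_ext pi F G : (forall b, F b = G b) -> Ex pi F = Ex pi G.
Proof. by move=> h; rewrite /Ex; apply: eq_bigr => b _; rewrite h. Qed.

Lemma Ex_add pi F G : Ex pi (fun b => F b + G b) = Ex pi F + Ex pi G.
Proof. by rewrite /Ex -big_split; apply: eq_bigr => b _; rewrite mulrDr. Qed.

Lemma Ex_scale pi a F : Ex pi (fun b => a * F b) = a * Ex pi F.
Proof. by rewrite /Ex mulr_sumr; apply: eq_bigr => b _; rewrite mulrCA. Qed.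

Lemma Ex_sub pi F G : Ex pi (fun b => F b - G b) = Ex pi F - Ex pi G.
Proof.
rewrite (@Ex_ext pi _ (fun b => F b + (-1) * G b)); last by move=> b; rewrite mulN1r.
by rewrite Ex_add Ex_scale mulN1r.
Qed.

Lemma Ex_sum (J : finType) pi (f : J -> {ffun I -> bool} -> RR) :
  Ex pi (fun b => \sum_j f j b) = \sum_j Ex pi (f j).
Proof.
rewrite /Ex exchange_big /=; apply: eq_bigr => b _; by rewrite mulr_sumr.
Qed.

Lemma wt_ge0 pi : (forall i v, 0 <= pi i v) -> forall b, 0 <= wt pi b.
Proof. by move=> h b; apply: prodr_ge0 => i _. Qed.

Lemma Ex_le pi F G : (forall i v, 0 <= pi i v) -> (forall b, F b <= G b) ->
  Ex pi F <= Ex pi G.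
Proof.
move=> h hFG; apply: ler_sum => b _; apply: ler_wpM2l; [exact: wt_ge0|exact: hFG].
Qed.

Lemma Ex_one pi : (forall i, pi i true + pi i false = 1) -> Ex pi (fun _ => 1) = 1.
Proof.
move=> h; have := Ex_prod pi (fun _ _ => 1).
have -> : \prod_i Eb (pi i) (fun _ => 1) = 1.
  by apply: big1 => i _; rewrite /Eb !mulr1 h.
by move=> e; rewrite -[RHS]e; apply: Ex_ext => b; rewrite big1.
Qed.

Lemma Ex_const pi c : (forall i, pi i true + pi i false = 1) -> Ex pi (fun _ => c) = c.
Proof.
move=> h; rewrite (@Ex_ext pi _ (fun b => c * 1)); last by move=> b; rewrite mulr1.
by rewrite Ex_scale Ex_one ?mulr1.
Qed.

End Ex2.

Lemma num_ineq (x : RR) (l : nat) : 0 <= x -> x <= 1 -> x * l%:R <= 1/2 ->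
  (1 + x) ^+ l - (1 - x) ^+ l <= 4 * (x * l%:R).
Proof.
move=> x0 x1 xl.
have bern : 1 - x * l%:R <= (1 - x) ^+ l.
  elim: l xl => [|l IH] xl; first by rewrite mulr0 subr0 expr0.
  have xl' : x * l%:R <= 1/2 by apply: le_trans xl; rewrite ler_wpM2l // ler_nat.
  have := IH xl'; rewrite exprS => h.
  have h0 : 0 <= 1 - x by lra.
  have : (1 - x) * (1 - x * l%:R) <= (1 - x) * (1 - x) ^+ l by rewrite ler_wpM2l.
  have hh : 0 <= x * (x * l%:R) by apply: mulr_ge0 => //; apply: mulr_ge0.
  rewrite -addn1 natrD; move: hh; set L := l%:R; set M := (1 - x) ^+ l => hh hl.
  have e : (1 - x) * (1 - x * L) = 1 - x * (L + 1%:R) + x * (x * L) by ring.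
  lra.
have prod1 : (1 + x) ^+ l * (1 - x) ^+ l <= 1.
  rewrite -exprMn; apply: exprn_ile1; nra.
move: bern prod1 xl.
set a := (1 + x) ^+ l; set c := (1 - x) ^+ l; set y := x * l%:R.
move=> bern prod1 xl.
have a0 : 0 <= a by apply: exprn_ge0; lra.
have y0 : 0 <= y by apply: mulr_ge0.
have c1 : c <= 1 by apply: exprn_ile1; lra.
have u0 : 0 <= (c - (1 - y)) * (c + 1 + 3 * y) by apply: mulr_ge0; lra.
have h2 : 0 <= y * (2 - 3 * y) by apply: mulr_ge0; lra.
have e : c * (c + 4 * y) = 1 + y * (2 - 3 * y) + (c - (1 - y)) * (c + 1 + 3 * y) by ring.
have h3 : 1 <= c * (c + 4 * y) by lra.
have e2 : (a - c - 4 * y) * c = a * c - c * (c + 4 * y) by ring.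
have h4 : (a - c - 4 * y) * c <= 0 by lra.
have cp : 0 < c by lra.
have : a - c - 4 * y <= 0.
  nra.
lra.
Qed.

Lemma Ex_pi (I : finType) (pi pi' : I -> bool -> RR) F :
  (forall i v, pi i v = pi' i v) -> Ex pi F = Ex pi' F.
Proof.
by move=> h; rewrite /Ex; apply: eq_bigr => b _; rewrite /wt; congr (_ * _); apply: eq_bigr.
Qed.

Lemma Ex_sq (I : finType) (pi : I -> bool -> RR) F :
  (forall i v, 0 <= pi i v) -> (forall i, pi i true + pi i false = 1) ->
  (Ex pi F) ^+ 2 <= Ex pi (fun b => F b ^+ 2).
Proof.
move=> h0 h1.
have := @CS _ (fun b => wt pi b) (fun _ => 1) F (wt_ge0 h0).
have e1 : \sum_b wt pi b * 1 * F b = Ex pi F by apply: eq_bigr => b _; rewrite mulr1.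
have e2 : \sum_b wt pi b * 1 ^+ 2 = 1.
  by rewrite -[RHS](Ex_one h1) /Ex; apply: eq_bigr => b _ /=; rewrite expr1n.
by rewrite e1 e2 mul1r.
Qed.

Lemma Ex_CS (I : finType) (pi : I -> bool -> RR) F G :
  (forall i v, 0 <= pi i v) ->
  (Ex pi (fun b => F b * G b)) ^+ 2 <= Ex pi (fun b => F b ^+ 2) * Ex pi (fun b => G b ^+ 2).
Proof.
move=> h0; have := @CS _ (fun b => wt pi b) F G (wt_ge0 h0).
have -> : \sum_b wt pi b * F b * G b = Ex pi (fun b => F b * G b).
  by apply: eq_bigr => b _; rewrite mulrA.
by [].
Qed.

Ltac fld := field; try done.

Definition sgn (v : bool) : RR := if v then 1 else -1.
Definition pt_of t (j : 'I_t) (v : bool) : pt t :=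
  fun l => if l == j then (if v then 1 else 0) else 1/2.

Lemma pt_of_inX t j v : inX (@pt_of t j v).
Proof. by move=> l; rewrite /pt_of; case: (l == j); case: v => /=; lra. Qed.

Lemma dinf_pt t (Q : pt t) j v : inC Q ->
  dinf Q (pt_of j v) = if v then 1 - Q j else Q j.
Proof.
move=> hQ; rewrite /dinf.
have hv : `|Q j - pt_of j v j| = if v then 1 - Q j else Q j.
  rewrite /pt_of eqxx; have := hQ j; case: v => /andP [h1 h2].
    by rewrite ler0_norm ?opprB //; lra.
  by rewrite subr0 ger0_norm //; lra.
apply/eqP; rewrite eq_le; apply/andP; split.
  apply: bigmax_le; first by rewrite -hv.
  move=> l _; rewrite /pt_of; case: eqP => [->|_]; first by rewrite -hv /pt_of eqxx.
  have h4 : 1/4 <= (if v then 1 - Q j else Q j).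
    by have := hQ j; case: v {hv} => /andP [h1 h2]; lra.
  apply: le_trans h4; have := hQ l => /andP [h1 h2].
  rewrite ler_norml; apply/andP; split; lra.
by rewrite -hv; apply: (le_bigmax (0:RR) (fun l => `|Q l - pt_of j v l|) j).
Qed.

Section Inst.
Variables (t B : nat).
Local Notation PT := (prod (ordinal t) (ordinal B)).
Definition nn := #|{: PT}|.
Definition J (i : 'I_nn) : 'I_t := (enum_val i).1.

Lemma nn_eq : nn = (t * B)%N.
Proof. by rewrite /nn card_prod !card_ord. Qed.

Lemma sum_J (f : 'I_t -> RR) : \sum_(i : 'I_nn) f (J i) = B%:R * \sum_j f j.
Proof.
rewrite (reindex (@enum_rank PT)) /=; last first.
  by exists enum_val => x _; [rewrite enum_rankK | rewrite enum_valK].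
rewrite /J; under eq_bigr do rewrite enum_rankK.
rewrite -(pair_bigA _ (fun j (r : 'I_B) => f j)) /= mulr_sumr.
by apply: eq_bigr => j _; rewrite sumr_const card_ord mulr_natl.
Qed.

Definition xb (b : {ffun 'I_nn -> bool}) : 'I_nn -> pt t := fun i => pt_of (J i) (b i).

Lemma cost_xb b (Q : pt t) : inC Q ->
  social_cost (xb b) Q = (\sum_i (if b i then 1 - Q (J i) else Q (J i))) / nn%:R.
Proof.
move=> hQ; rewrite /social_cost; congr (_ / _); apply: eq_bigr => i _.
by rewrite /xb dinf_pt.
Qed.

End Inst.

Lemma panel_inX t n k (x : 'I_n -> pt t) S :
  (forall i, inX (x i)) -> forall j, inX (@panel t n k x S j).
Proof.
move=> hx j; rewrite /panel.
elim: (enum S) (nat_of_ord j) => [|a s IH] [|m] /=.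
- by move=> l; rewrite lexx ler01.
- by move=> l; rewrite lexx ler01.
- exact: hx.
- exact: IH.
Qed.

Lemma panel_eq t n k (x x' : 'I_n -> pt t) (S : {set 'I_n}) :
  (forall i, i \in S -> x i = x' i) -> @panel t n k x S = @panel t n k x' S.
Proof.
move=> h; rewrite /panel.
have -> : [seq x i | i <- enum S] = [seq x' i | i <- enum S].
  by apply/eq_in_map => i; rewrite mem_enum; apply: h.
by [].
Qed.

Section Main.
Variables (t B k : nat) (q : ('I_k -> pt t) -> pt t) (d : RR).
Hypothesis hq : forall y, (forall j, inX (y j)) -> inC (q y).
Hypotheses (d0 : 0 <= d) (d1 : d <= 1/4).

Local Notation n := (nn t B).
Definition pis (s : {ffun 'I_t -> bool}) (i : 'I_n) (v : bool) : RR :=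
  1/2 + d * sgn (s (J i)) * sgn v.
Definition unif : 'I_t -> bool -> RR := fun _ _ => 1/2.
Definition Y S (b : {ffun 'I_n -> bool}) : pt t := q (@panel t n k (xb b) S).
Definition Z S j b := Y S b j - 1/2.
Definition T S j := Ex unif (fun s => sgn (s j) * Ex (pis s) (Z S j)).
Definition qs (s : {ffun 'I_t -> bool}) : pt t := fun l => 1/2 + sgn (s l) / 4.

Lemma sgn2 v : sgn v * sgn v = 1.
Proof. by case: v; rewrite /sgn ?mulr1 ?mulrNN ?mulr1. Qed.

Lemma sgn_norm v (x : RR) : `|sgn v * x| = `|x|.
Proof. by case: v; rewrite /sgn ?mul1r ?mulN1r ?normrN. Qed.

Lemma pis_sum s i : pis s i true + pis s i false = 1.
Proof. rewrite /pis /sgn /=; case: (s (J i)); lra. Qed.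

Lemma pis_ge0 s i v : 0 <= pis s i v.
Proof.
rewrite /pis; case: (s (J i)); case: v; rewrite /sgn /= ?mulr1 ?mulrN1 ?mulrN ?opprK; move: d0 d1 => h0 h1; lra.
Qed.

Lemma unif_sum i : unif i true + unif i false = 1.
Proof. rewrite /unif; lra. Qed.

Lemma unif_ge0 i v : 0 <= unif i v.
Proof. rewrite /unif; lra. Qed.

Lemma Y_inC S b : inC (Y S b).
Proof. apply: hq => j; apply: panel_inX => i; exact: pt_of_inX. Qed.

Lemma Z_bound S j b : `|Z S j b| <= 1/4.
Proof.
rewrite /Z; have /andP [h1 h2] := Y_inC S b j.
rewrite ler_norml; apply/andP; split; lra.
Qed.

Lemma Y_dep (S : {set 'I_n}) (b b' : {ffun 'I_n -> bool}) : (forall i, i \in S -> b i = b' i) -> Y S b = Y S b'.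
Proof.
move=> h; rewrite /Y (@panel_eq t n k (xb b) (xb b')) // => i iS.
by rewrite /xb h.
Qed.

Lemma Y_indep (S : {set 'I_n}) (F : pt t -> RR) i : i \notin S -> indep (fun b => F (Y S b)) i.
Proof.
move=> iS b b' h; rewrite (@Y_dep S b b') // => l lS; apply: h.
by apply: contraNneq iS => <-.
Qed.

Lemma Ex_abs (I : finType) (pi : I -> bool -> RR) F c :
  (forall i v, 0 <= pi i v) -> (forall i, pi i true + pi i false = 1) ->
  (forall b, `|F b| <= c) -> `|Ex pi F| <= c.
Proof.
move=> h0 h1 hF; rewrite ler_norml; apply/andP; split.
  rewrite -(Ex_const (- c) h1); apply: Ex_le => // b.
  by have := hF b; rewrite ler_norml => /andP [].
rewrite -(Ex_const c h1); apply: Ex_le => // b.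
by have := hF b; rewrite ler_norml => /andP [].
Qed.

Lemma T_bound S j : `|T S j| <= 1/4.
Proof.
rewrite /T; apply: Ex_abs; [exact: unif_ge0 | exact: unif_sum |] => s.
rewrite sgn_norm; apply: Ex_abs; [exact: pis_ge0 | exact: pis_sum | exact: Z_bound].
Qed.

Definition term S (s : {ffun 'I_t -> bool}) (b : {ffun 'I_n -> bool}) i :=
  - sgn (b i) * (Y S b (J i) - qs s (J i)).

Lemma term_out (S : {set 'I_n}) i : i \notin S ->
  Ex unif (fun s => Ex (pis s) (fun b => term S s b i)) = d/2 - 2 * d * T S (J i).
Proof.
move=> iS.
have h s : Ex (pis s) (fun b => term S s b i) =
    d/2 - 2 * d * (sgn (s (J i)) * Ex (pis s) (Z S (J i))).
  rewrite /term (@Ex_coord _ (pis s) i (fun v => - sgn v)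
    (fun b => Y S b (J i) - qs s (J i))); last 2 first.
  - exact: pis_sum.
  - exact: (@Y_indep S (fun y => y (J i) - qs s (J i))).
  rewrite (@Ex_ext _ (pis s) _ (fun b => Z S (J i) b - (qs s (J i) - 1/2))); last first.
    by move=> b; rewrite /Z; ring.
  rewrite Ex_sub Ex_const; last exact: pis_sum.
  rewrite /Eb /pis /qs /sgn; by case: (s (J i)) => /=; fld.
rewrite (Ex_ext _ h) Ex_sub Ex_const; last exact: unif_sum.
by rewrite Ex_scale /T.
Qed.

Lemma term_in S s b i : - (1/2) <= term S s b i.
Proof.
have h : `|Y S b (J i) - qs s (J i)| <= 1/2.
  have /andP [h1 h2] := Y_inC S b (J i).
  rewrite /qs /sgn; case: (s (J i)) => /=; rewrite ler_norml; apply/andP; split; lra.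
have := h; rewrite -(sgn_norm (b i)) ler_norml => /andP [_ h2].
rewrite /term mulNr; lra.
Qed.

Lemma LB (S : {set 'I_n}) :
  \sum_(i : 'I_n) (d/2 - 2 * d * T S (J i)) - #|S|%:R * (1/2 + d) <=
  Ex unif (fun s => Ex (pis s) (fun b => \sum_(i : 'I_n) term S s b i)).
Proof.
rewrite (@Ex_ext _ unif _ (fun s => \sum_i Ex (pis s) (fun b => term S s b i))); last first.
  by move=> s; rewrite Ex_sum.
rewrite Ex_sum.
have -> : #|S|%:R * (1/2 + d) = \sum_i (if i \in S then 1/2 + d else 0).
  by rewrite -big_mkcond /= sumr_const mulr_natl.
rewrite -sumrB; apply: ler_sum => i _.
case: ifP => iS; last by rewrite subr0 term_out // iS.
have hT := T_bound S (J i).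
have : - (1/2) <= Ex unif (fun s => Ex (pis s) (fun b => term S s b i)).
  rewrite -(Ex_const (- (1/2)) unif_sum); apply: Ex_le; first exact: unif_ge0.
  move=> s; rewrite -(Ex_const (- (1/2)) (pis_sum s)); apply: Ex_le; first exact: pis_ge0.
  by move=> b /=; apply: term_in.
move: hT; rewrite ler_norml => /andP [h1 h2] h3.
have h4 : 0 <= d * (1/4 - T S (J i)) by apply: mulr_ge0 => //; lra.
have h5 : 0 <= d * (T S (J i) + 1/4) by apply: mulr_ge0 => //; lra.
move: d0 => h0; nra.
Qed.

Definition blkS (S : {set 'I_n}) j := [set i in S | J i == j].
Definition pi0 (s : {ffun 'I_t -> bool}) j (i : 'I_n) (v : bool) : RR :=
  if J i == j then 1/2 else pis s i v.
Definition gf (a v : bool) : RR := 1 + 2 * d * sgn a * sgn v.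
Definition L (S : {set 'I_n}) (j : 'I_t) (a : bool) (b : {ffun 'I_n -> bool}) := \prod_(i in blkS S j) gf a (b i).

Lemma pi0_sum s (j : 'I_t) i : pi0 s j i true + pi0 s j i false = 1.
Proof. rewrite /pi0; case: ifP => _; [lra | exact: pis_sum]. Qed.

Lemma pi0_ge0 s (j : 'I_t) i v : 0 <= pi0 s j i v.
Proof. rewrite /pi0; case: ifP => _; [lra | exact: pis_ge0]. Qed.

Lemma L_indep (S : {set 'I_n}) (j : 'I_t) (a : bool) (F : {ffun 'I_n -> bool} -> RR) i : i \notin S ->
  indep F i -> indep (fun b => L S j a b * F b) i.
Proof.
move=> iS hF b b' h; rewrite (hF b b' h); congr (_ * _).
apply: eq_bigr => l; rewrite inE => /andP [lS _]; rewrite h //.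
by apply: contraNneq iS => <-.
Qed.

Lemma step_a (S : {set 'I_n}) (j : 'I_t) (s : {ffun 'I_t -> bool}) :
  Ex (pis s) (Z S j) = Ex (pi0 s j) (fun b => L S j (s j) b * Z S j b).
Proof.
have w (b : {ffun 'I_n -> bool}) : wt (pis s) b =
    wt (pi0 s j) b * \prod_i (if J i == j then gf (s j) (b i) else 1).
  rewrite /wt -big_split /=; apply: eq_bigr => i _.
  rewrite /pi0; case: eqP => [<-|_]; last by rewrite mulr1.
  rewrite /pis /gf; fld.
have e : forall b : {ffun 'I_n -> bool}, \prod_i (if J i == j then gf (s j) (b i) else 1) =
   \prod_(i <- [seq i <- index_enum 'I_n | (J i == j) && (i \notin S)]) gf (s j) (b i)
   * L S j (s j) b.
  move=> b; rewrite -big_mkcond /= big_filter (bigID (fun i => i \in S)) /= mulrC.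
  congr (_ * _); apply: eq_bigl => i; by rewrite /blkS inE andbC.
set sq := [seq i <- index_enum 'I_n | (J i == j) && (i \notin S)].
rewrite -(@Ex_set _ (pi0 s j) sq (fun _ => gf (s j)) (fun b => L S j (s j) b * Z S j b)).
- by rewrite /Ex; apply: eq_bigr => b _; rewrite w e !mulrA.
- exact: pi0_sum.
- by apply: filter_uniq; apply: index_enum_uniq.
- move=> i; rewrite mem_filter => /andP [/andP [/eqP Ji _] _].
  rewrite /Eb /pi0 Ji eqxx /gf /sgn /=; fld.
- move=> i; rewrite mem_filter => /andP [/andP [_ iS] _].
  apply: L_indep => //; exact: (@Y_indep S (fun y => y j - 1/2)).
Qed.

Definition G (S : {set 'I_n}) (j : 'I_t) (a : bool) (s : {ffun 'I_t -> bool}) := Ex (pi0 s j) (fun b => L S j a b * Z S j b).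

Lemma G_indep (S : {set 'I_n}) (j : 'I_t) (a : bool) : indep (G S j a) j.
Proof.
move=> s s' h; rewrite /G; apply: Ex_pi => i v; rewrite /pi0.
case: eqP => // /eqP Ji; by rewrite /pis h.
Qed.

Lemma step_b (S : {set 'I_n}) (j : 'I_t) :
  T S j = 1/2 * Ex unif (fun s => Ex (pi0 s j) (fun b => (L S j true b - L S j false b) * Z S j b)).
Proof.
rewrite /T (@Ex_ext _ unif _ (fun s => (if s j then 1 else 0) * G S j true s
    - (if s j then 0 else 1) * G S j false s)); last first.
  move=> s; rewrite step_a /G; case: (s j); rewrite /sgn /=; ring.
rewrite Ex_sub (@Ex_coord _ unif j (fun v => if v then 1 else 0) (G S j true));
  [|exact: unif_sum|exact: G_indep].
rewrite (@Ex_coord _ unif j (fun v => if v then 0 else 1) (G S j false));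
  [|exact: unif_sum|exact: G_indep].
rewrite /Eb /= [unif j true]/unif [unif j false]/unif !mulr1 !mulr0 addr0 add0r -mulrBr; congr (_ * _).
rewrite -Ex_sub; apply: Ex_ext => s; rewrite /G -Ex_sub.
by apply: Ex_ext => b; rewrite mulrBl.
Qed.

Lemma step_e (S : {set 'I_n}) (j : 'I_t) (s : {ffun 'I_t -> bool}) (a c : bool) :
  Ex (pi0 s j) (fun b => L S j a b * L S j c b) =
  (1 + 4 * d ^+ 2 * sgn a * sgn c) ^+ #|blkS S j|.
Proof.
pose h := fun i v => if i \in blkS S j then gf a v * gf c v else 1.
rewrite (@Ex_ext _ (pi0 s j) _ (fun b => \prod_i h i (b i))); last first.
  by move=> b; rewrite /L -big_split /= big_mkcond.
rewrite Ex_prod (eq_bigr (fun i => if i \in blkS S j then 1 + 4 * d ^+ 2 * sgn a * sgn c else 1)).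
  by rewrite -big_mkcond /= prodr_const.
move=> i _; rewrite /h; case: ifP => hi.
  move: hi; rewrite inE => /andP [_ /eqP Ji].
  rewrite /Eb /pi0 Ji eqxx /gf /sgn /=; fld.
by rewrite /Eb !mulr1 pi0_sum.
Qed.

Lemma ED2 (S : {set 'I_n}) (j : 'I_t) s :
  Ex (pi0 s j) (fun b => (L S j true b - L S j false b) ^+ 2) <=
  32 * (d ^+ 2 * #|blkS S j|%:R) \/ 1/2 < 4 * d ^+ 2 * #|blkS S j|%:R.
Proof.
set l := #|blkS S j|.
case: (lerP (4 * d ^+ 2 * l%:R) (1/2)) => hl; last by right.
left.
rewrite (@Ex_ext _ (pi0 s j) _ (fun b => L S j true b * L S j true b
   - 2 * (L S j true b * L S j false b) + L S j false b * L S j false b)); last first.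
  by move=> b; ring.
rewrite Ex_add Ex_sub Ex_scale !step_e /sgn /= !mulr1 !mulrN1.
rewrite opprK -/l.
have hx0 : 0 <= 4 * d ^+ 2 by apply: mulr_ge0 => //; apply: sqr_ge0.
have hd2 : d * d <= 1/4 * (1/4) by apply: ler_pM.
have hx1 : 4 * d ^+ 2 <= 1 by rewrite expr2; lra.
have := num_ineq hx0 hx1 hl.
move: ((1 + 4 * d ^+ 2) ^+ l) ((1 - 4 * d ^+ 2) ^+ l) => A C.
lra.
Qed.

Lemma TB (S : {set 'I_n}) (j : 'I_t) : T S j ^+ 2 <= d ^+ 2 * #|blkS S j|%:R / 2.
Proof.
set l := #|blkS S j|.
have hT := T_bound S j.
have [hE|hl] : (forall s, Ex (pi0 s j) (fun b => (L S j true b - L S j false b) ^+ 2) <=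
  32 * (d ^+ 2 * l%:R)) \/ 1/2 < 4 * d ^+ 2 * l%:R.
  case: (lerP (4 * d ^+ 2 * l%:R) (1/2)) => hl; last by right.
  left => s; case: (ED2 S j s) => // h; lra.
- rewrite step_b exprMn.
  set H := fun s => Ex (pi0 s j) (fun b => (L S j true b - L S j false b) * Z S j b).
  have hH : Ex unif H ^+ 2 <= Ex unif (fun s => H s ^+ 2).
    apply: Ex_sq; [exact: unif_ge0 | exact: unif_sum].
  have hH2 : Ex unif (fun s => H s ^+ 2) <= 2 * (d ^+ 2 * l%:R).
    rewrite -(Ex_const (2 * (d ^+ 2 * l%:R)) unif_sum); apply: Ex_le; first exact: unif_ge0.
    move=> s /=.
    have := @Ex_CS _ (pi0 s j) (fun b => L S j true b - L S j false b) (Z S j) (pi0_ge0 s j).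
    have hZ : Ex (pi0 s j) (fun b => Z S j b ^+ 2) <= 1/16.
      rewrite -(Ex_const (1/16) (pi0_sum s j)); apply: Ex_le; first exact: pi0_ge0.
      move=> b /=; have := Z_bound S j b; rewrite ler_norml => /andP [h1 h2].
      have : 0 <= (1/4 - Z S j b) * (1/4 + Z S j b) by apply: mulr_ge0; lra.
      have -> : (1/4 - Z S j b) * (1/4 + Z S j b) = 1/16 - Z S j b ^+ 2 by fld.
      lra.
    have hD0 : 0 <= Ex (pi0 s j) (fun b => (L S j true b - L S j false b) ^+ 2).
      rewrite -(Ex_const 0 (pi0_sum s j)); apply: Ex_le; first exact: pi0_ge0.
      by move=> b /=; apply: sqr_ge0.
    have hE' := hE s.
    rewrite /H => h1.
    apply: le_trans h1 _.
    set X := Ex _ (fun b => _ ^+ 2) in hD0 hE' *.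
    set W := Ex _ (fun b => Z S j b ^+ 2) in hZ *.
    have : X * W <= X * (1/16) by apply: ler_wpM2l.
    lra.
  have h4 : (1/2 : RR) ^+ 2 = 1/4 by rewrite expr2; fld.
  rewrite h4; lra.
- have : T S j ^+ 2 <= 1/16.
    move: hT; rewrite ler_norml => /andP [h1 h2].
    have : 0 <= (1/4 - T S j) * (1/4 + T S j) by apply: mulr_ge0; lra.
    have -> : (1/4 - T S j) * (1/4 + T S j) = 1/16 - T S j ^+ 2 by fld.
    lra.
  lra.
Qed.

End Main.

Lemma dinf_ge0 t (x y : pt t) : 0 <= dinf x y.
Proof. exact: bigmax_ge_id. Qed.

Lemma qs_inC t (s : {ffun 'I_t -> bool}) : inC (qs s).
Proof. by move=> l; rewrite /qs /sgn; case: (s l) => /=; apply/andP; split; lra. Qed.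

Lemma sum_blk t B (S : {set 'I_(nn t B)}) :
  \sum_(j : 'I_t) (#|blkS S j|%:R : RR) = #|S|%:R.
Proof.
have e (A : {set 'I_(nn t B)}) : (#|A|%:R : RR) = \sum_(i in A) 1 by rewrite sumr_const.
rewrite e (partition_big (@J t B) predT) //=.
by apply: eq_bigr => j _; rewrite e; apply: eq_bigl => i; rewrite /blkS inE.
Qed.

Lemma exp_cost t n k q (x : 'I_n -> pt t) :
  exp_panel_cost q x =
  (\sum_(S : {set 'I_n} | #|S| == k) social_cost x (q (@panel t n k x S))) / ('C(n, k))%:R.
Proof. by []. Qed.

Lemma count_S n k (c : RR) :
  \sum_(S : {set 'I_n} | #|S| == k) c = ('C(n, k))%:R * c.
Proof.
rewrite (eq_bigl (fun S => S \in [set S : {set 'I_n} | #|S| == k])); last first.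
  by move=> S; rewrite inE.
by rewrite sumr_const card_draws card_ord mulr_natl.
Qed.

Lemma Ex_sumP (I J : finType) (pi : I -> bool -> RR) (P : pred J) (f : J -> {ffun I -> bool} -> RR) :
  Ex pi (fun b => \sum_(j | P j) f j b) = \sum_(j | P j) Ex pi (f j).
Proof.
rewrite /Ex exchange_big /=; apply: eq_bigr => b _; by rewrite mulr_sumr.
Qed.

Lemma cost_diff t B k q (S : {set 'I_(nn t B)}) s b :
  (forall y, (forall j, inX (y j)) -> inC (q y)) ->
  social_cost (xb b) (q (@panel t (nn t B) k (xb b) S)) - social_cost (xb b) (qs s) =
  (\sum_i term q S s b i) / (nn t B)%:R.
Proof.
move=> hq; rewrite (cost_xb _ (qs_inC s)) cost_xb; last first.
  by apply: hq => j; apply: panel_inX => i; apply: pt_of_inX.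
rewrite -mulrBl -sumrB; congr (_ / _); apply: eq_bigr => i _.
rewrite /term /Y /sgn; case: (b i) => /=; ring.
Qed.

Lemma cost_qs t B (s : {ffun 'I_t -> bool}) (b : {ffun 'I_(nn t B) -> bool}) : social_cost (xb b) (qs s) <= 3/4 :> RR.
Proof.
rewrite (cost_xb _ (qs_inC s)).
have hn : (0 : RR) <= (nn t B)%:R by apply: ler0n.
have : \sum_(i : 'I_(nn t B)) (if b i then 1 - qs s (J i) else qs s (J i)) <= \sum_(i : 'I_(nn t B)) (3/4 : RR).
  apply: ler_sum => i _; rewrite /qs /sgn; case: (b i); case: (s (J i)) => /=; lra.
rewrite sumr_const card_ord => h.
case: (posnP (nn t B)) => [hz|np].
  by rewrite [X in X%:R]hz invr0 mulr0; lra.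
rewrite ler_pdivrMr ?ltr0n //; apply: le_trans h _.
by rewrite mulr_natr.
Qed.

Theorem theorem4p12 :
  exists c : RR, 0 < c /\
  forall (t : nat) (eps : RR), 0 < eps -> eps < 1/64 ->
  forall (k : nat), (1 <= k)%N ->
  forall q : ('I_k -> pt t) -> pt t,
    (forall y : 'I_k -> pt t, (forall j, inX (y j)) -> inC (q y)) ->
    (forall (n : nat) (x : 'I_n -> pt t), (k <= n)%N -> (forall i, inX (x i)) ->
       exp_panel_cost q x <= (1 + eps) * social_opt x) ->
    c * t%:R / eps ^+ 2 <= k%:R.
Proof.
exists (1/512); split; first lra.
move=> t eps he he' k hk q hq hyp.
have [t0|tpos] := posnP t; first by rewrite t0 mulr0 mul0r ler0n.
set d : RR := 4 * eps.
have d0 : 0 <= d by rewrite /d; lra.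
have d1 : d <= 1/4 by rewrite /d; lra.
have he0 : 0 <= 4 / eps by apply: divr_ge0; lra.
set M := (Num.Def.archi_bound (4 / eps)).+1.
have hM : 4 / eps < M%:R.
  apply: lt_le_trans (archi_boundP he0) _; rewrite ler_nat; exact: leqnSn.
set B := (k * M)%N.
have hkB : (k <= nn t B)%N.
  have M1 : (0 < M)%N by [].
  rewrite nn_eq /B; apply: (leq_trans (leq_pmulr k M1)); exact: leq_pmull.
set n := nn t B.
set C := 'C(n, k).
have Cpos : (0 < C)%N by rewrite bin_gt0.
have hc : forall (s : {ffun 'I_t -> bool}) (b : {ffun 'I_n -> bool}),
    \sum_(S : {set 'I_n} | #|S| == k) \sum_i term q S s b i <= C%:R * (n%:R * (3/4 * eps)).
  move=> s b.
  have h1 := hyp n (xb b) hkB (fun i => pt_of_inX _ _).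
  rewrite exp_cost in h1.
  have h2 : social_opt (xb b) <= social_cost (xb b) (qs s).
    rewrite /social_opt; apply: ge_inf.
    - exists 0 => y [q0 _ <-]; apply: divr_ge0; last exact: ler0n.
      by apply: sumr_ge0 => i _; apply: dinf_ge0.
    - by exists (qs s) => //; exact: qs_inC.
  have h3 := cost_qs s b.
  set cq := social_cost (xb b) (qs s) in h2 h3.
  set X := \sum_(S : {set 'I_n} | #|S| == k) \sum_i term q S s b i.
  have np : (0 : RR) < n%:R by rewrite ltr0n; apply: leq_trans hkB.
  have Cp : (0 : RR) < C%:R by rewrite ltr0n.
  have e : \sum_(S : {set 'I_n} | #|S| == k) social_cost (xb b) (q (@panel t n k (xb b) S))
      = C%:R * cq + X / n%:R.
    rewrite -count_S /X mulr_suml -big_split; apply: eq_bigr => S _.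
    by rewrite -(cost_diff S s b hq) /cq /= addrC subrK.
  rewrite e ler_pdivrMr // in h1.
  have h4 : X / n%:R <= C%:R * (eps * cq).
    have h5 : (1 + eps) * social_opt (xb b) * C%:R <= (1 + eps) * cq * C%:R.
      by rewrite ler_wpM2r ?ler0n // ler_wpM2l //; lra.
    have : (1 + eps) * cq * C%:R = C%:R * cq + C%:R * (eps * cq) by ring.
    lra.
  have h6 : C%:R * (eps * cq) <= C%:R * (eps * (3/4)).
    by rewrite ler_wpM2l ?ler0n // ler_wpM2l //; lra.
  have h7 : X = n%:R * (X / n%:R) by rewrite mulrC divfK // gt_eqF.
  rewrite h7.
  have : n%:R * (X / n%:R) <= n%:R * (C%:R * (eps * (3/4))).
    rewrite ler_wpM2l ?ler0n //; lra.
  have -> : C%:R * (n%:R * (3 / 4 * eps)) = n%:R * (C%:R * (eps * (3/4))) :> RR by ring.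
  done.
have hav : Ex (@unif t) (fun s => Ex (pis (B:=B) d s)
      (fun b => \sum_(S : {set 'I_n} | #|S| == k) \sum_i term q S s b i))
    <= C%:R * (n%:R * (3/4 * eps)).
  rewrite -[X in _ <= X](Ex_const _ (@unif_sum t)); apply: Ex_le; first exact: unif_ge0.
  move=> s /=; rewrite -[X in _ <= X](Ex_const _ (pis_sum (B:=B) d s)).
  apply: Ex_le; first exact: (pis_ge0 d0 d1).
  by move=> b /=; apply: hc.
have eS : Ex (@unif t) (fun s => Ex (pis (B:=B) d s)
      (fun b => \sum_(S : {set 'I_n} | #|S| == k) \sum_i term q S s b i)) =
    \sum_(S : {set 'I_n} | #|S| == k) Ex (@unif t) (fun s => Ex (pis (B:=B) d s)
      (fun b => \sum_i term q S s b i)).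
  rewrite -Ex_sumP; apply: Ex_ext => s; by rewrite Ex_sumP.
rewrite eS -count_S in hav.
set f := fun S : {set 'I_n} =>
  \sum_(i : 'I_n) (d/2 - 2 * d * T q d S (J i)) - #|S|%:R * (1/2 + d).
have hf : \sum_(S : {set 'I_n} | #|S| == k) f S <= \sum_(S : {set 'I_n} | #|S| == k) n%:R * (3/4 * eps).
  apply: le_trans hav; apply: ler_sum => S _; exact: (LB hq d0 d1 S).
have [S /andP [/eqP hS hfS]] : exists S : {set 'I_n}, (#|S| == k) && (f S <= n%:R * (3/4 * eps)).
  case: (boolP [exists S : {set 'I_n}, (#|S| == k) && (f S <= n%:R * (3/4 * eps))]).
    by move/existsP.
  move/existsPn => hall; exfalso.
  have hhas : has (fun S : {set 'I_n} => #|S| == k) (index_enum {set 'I_n}).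
    have : (0 < #|[set S : {set 'I_n} | #|S| == k]|)%N by rewrite card_draws card_ord.
    rewrite card_gt0 => /set0Pn [S0]; rewrite inE => hS0.
    by apply/hasP; exists S0 => //; rewrite mem_index_enum.
  have hlt : forall S : {set 'I_n}, #|S| == k -> n%:R * (3/4 * eps) < f S.
    by move=> S hS; have := hall S; rewrite hS /= -ltNge.
  have := ltr_sum hhas hlt.
  by rewrite ltNge hf.
rewrite /f hS in hfS.
have eJ : \sum_(i : 'I_n) (d/2 - 2 * d * T q d S (J i)) =
    B%:R * \sum_(j : 'I_t) (d/2 - 2 * d * T q d S j) :=
  sum_J B (fun j => d/2 - 2 * d * T q d S j).
set TT := \sum_(j : 'I_t) T q d S j.
have eT : \sum_(j : 'I_t) (d/2 - 2 * d * T q d S j) = t%:R * (d/2) - 2 * d * TT.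
  by rewrite sumrB sumr_const card_ord -mulr_sumr [t%:R * _]mulr_natl.
have en : (n%:R : RR) = t%:R * B%:R by rewrite /n nn_eq natrM.
rewrite eJ eT en in hfS.
have hCS := @CS _ (fun _ : 'I_t => 1) (fun _ => 1) (fun j => T q d S j) (fun _ => ler01).
have e1 : \sum_(j : 'I_t) (fun _ => (1 : RR)) j * (fun _ => 1) j * (fun j => T q d S j) j = TT.
  by apply: eq_bigr => j _ /=; rewrite !mul1r.
have e2 : \sum_(j : 'I_t) (fun _ => (1 : RR)) j * (fun _ => 1) j ^+ 2 = t%:R.
  by rewrite (eq_bigr (fun _ => 1)) ?sumr_const ?card_ord // => j _ /=; rewrite expr1n mulr1.
have e3 : \sum_(j : 'I_t) (fun _ => (1 : RR)) j * (fun j => T q d S j) j ^+ 2 =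
    \sum_(j : 'I_t) T q d S j ^+ 2.
  by apply: eq_bigr => j _ /=; rewrite mul1r.
rewrite e1 e2 e3 in hCS.
have hT2 : \sum_(j : 'I_t) T q d S j ^+ 2 <= d ^+ 2 * k%:R / 2.
  apply: le_trans (ler_sum _ (fun j _ => TB hq d0 d1 S j)) _.
  rewrite -mulr_suml -mulr_sumr sum_blk hS.
  by [].
set tt : RR := t%:R in hfS hCS *.
set BB : RR := B%:R in hfS.
set kk : RR := k%:R in hfS hT2 *.
have tt1 : 1 <= tt by rewrite /tt ler1n.
have kk1 : 1 <= kk by rewrite /kk ler1n.
have hMe : 4 <= M%:R * eps.
  have := hM; rewrite ltr_pdivrMr //; lra.
have eB : BB = kk * M%:R by rewrite /BB /kk /B natrM.
have hBe : kk * (1/2 + d) <= tt * BB * eps / 4.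
  have h1 : kk * (1/2 + d) <= kk.
    have : 0 <= kk * (1/2 - d) by apply: mulr_ge0; lra.
    have : kk * (1/2 + d) = kk - kk * (1/2 - d) by fld.
    lra.
  have h2 : kk * 4 <= kk * (M%:R * eps) by rewrite ler_wpM2l //; lra.
  have h3 : 0 <= BB * eps by apply: mulr_ge0; [rewrite /BB ler0n | lra].
  have h4 : BB * eps <= tt * (BB * eps) by rewrite ler_peMl.
  have e4 : kk * (M%:R * eps) = BB * eps by rewrite eB; ring.
  have e5 : tt * BB * eps / 4 = tt * (BB * eps) / 4 by fld.
  lra.
have key : BB * eps * (tt - 8 * TT) <= 0.
  have e6 : BB * (tt * (d / 2) - 2 * d * TT) = 2 * (BB * eps * tt) - 8 * (BB * eps * TT).
    by rewrite /d; fld.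
  have e7 : tt * BB * (3 / 4 * eps) = 3/4 * (BB * eps * tt) by fld.
  have e8 : tt * BB * eps / 4 = 1/4 * (BB * eps * tt) by fld.
  have e9 : BB * eps * (tt - 8 * TT) = BB * eps * tt - 8 * (BB * eps * TT) by fld.
  lra.
have u0 : 0 < BB * eps.
  apply: mulr_gt0 => //; rewrite eB; apply: mulr_gt0; first lra.
  by rewrite ltr0n.
have h8 : tt <= 8 * TT.
  have : tt - 8 * TT <= 0 by rewrite -(pmulr_rle0 _ u0).
  lra.
have h64 : tt ^+ 2 <= 64 * TT ^+ 2.
  have : tt * tt <= (8 * TT) * (8 * TT) by apply: ler_pM => //; lra.
  rewrite !expr2; lra.
have h512 : tt ^+ 2 <= 512 * (eps ^+ 2) * kk * tt.
  have : TT ^+ 2 <= tt * (d ^+ 2 * kk / 2).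
    by apply: le_trans hCS _; rewrite ler_wpM2l //; lra.
  have e10 : tt * (d ^+ 2 * kk / 2) = 8 * (eps ^+ 2) * kk * tt by rewrite /d; fld.
  lra.
have hfin : tt <= 512 * (eps ^+ 2) * kk.
  have : tt * tt <= 512 * (eps ^+ 2) * kk * tt by rewrite -expr2.
  by rewrite ler_pM2r //; lra.
have ep2 : 0 < eps ^+ 2 by apply: exprn_gt0.
rewrite ler_pdivrMr //.
have e11 : 512 * eps ^+ 2 * kk = 512 * (kk * eps ^+ 2) by fld.
lra.
Qed.
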